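(* In the two-tier residency matching game described in the context, under the large market approximation, let $X\in[0,K]$ be the expected number of high hospitals listed by a high doctor under a symmetric strategy of the high doctors, and let $p(X,r)$ (resp. $p'(X,r)$) be the probability that a single application of a high doctor to a high (resp. low) hospital is accepted. Then $p(X,r)$ is strictly decreasing in $X$ for all $r>0$, and $p'(X,r)$ is strictly increasing in $X$.
   Context: Model: there are $n$ high-tier and $rn$ low-tier doctors ($r>0$), and $n$ high-tier and $rn$ low-tier hospitals, each with one position. Every hospital prefers every high doctor to every low doctor and every doctor prefers every high hospital to every low hospital; within a tier, preferences are independent uniformly random permutations. Each doctor submits a ranked list of exactly $K$ hospitals; hospitals submit full true rankings; doctor-proposing deferred acceptance is run. A doctor's pure strategy $(k,K-k)$ lists his $k$ most preferred high hospitals followed by his $K-k$ most preferred low hospitals; a symmetric strategy of high doctors in which a fraction $x$ play $(k+1,K-k-1)$ and $1-x$ play $(k,K-k)$ is summarized by $X=k+x$. Large market approximation: as $n\to\infty$ with $r,K$ fixed, each application of a high doctor to a high (low) hospital is accepted independently with probability $p$ ($p'$), these probabilities being determined by fixed-point equations stating that the expected number of matched doctors equals the expected number of hospitals receiving at least one application, where a hospital receiving on average $\lambda$ applications gets none with probability $e^{-\lambda}$ (e.g. if all high doctors list $k$ high hospitals, $(1-p)^k=e^{-(1-(1-p)^k)/p}$). *)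

(* Defs.v *)
From Stdlib Require Import Reals Lra Lia.
Open Scope R_scope.

(* Symmetric strategy of high doctors X = k + x, 0 <= x < 1:
   fraction (1-x) plays (k, K-k), fraction x plays (k+1, K-k-1). *)

(* Expected fraction of high doctors matched to a high hospital, when every
   application of a high doctor to a high hospital is accepted w.p. p. *)
Definition matched_high (k : nat) (x p : R) : R :=
  (1 - x) * (1 - (1 - p) ^ k) + x * (1 - (1 - p) ^ (S k)).

(* Fixed-point equation for high hospitals: expected number of matched
   (high doctor, high hospital) pairs = expected number of high hospitals
   receiving >= 1 application; the mean number of applications per high
   hospital is matched_high / p. (Everything divided by n.) *)
Definition high_eq (k : nat) (x p : R) : Prop :=
  matched_high k x p = 1 - exp (- (matched_high k x p / p)).

(* Expected number (divided by n) of high doctors matched to low hospitals,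
   where each application to a low hospital is accepted w.p. q. *)
Definition matched_low (K k : nat) (x p q : R) : R :=
  (1 - x) * (1 - p) ^ k * (1 - (1 - q) ^ (K - k))
  + x * (1 - p) ^ (S k) * (1 - (1 - q) ^ (K - k - 1)).

(* Fixed-point equation for the r n low hospitals; mean number of
   applications of high doctors per low hospital is matched_low / (r q). *)
Definition low_eq (K k : nat) (r x p q : R) : Prop :=
  matched_low K k x p q = r * (1 - exp (- (matched_low K k x p q / (r * q)))).

(* At X = 0 there are no such applications and the
   fixed-point equation is degenerate; we use the continuous extension p = 1. *)
Definition is_p_high (K : nat) (X p : R) : Prop :=
  0 < p <= 1 /\
  exists (k : nat) (x : R),
    X = INR k + x /\ 0 <= x < 1 /\ (k <= K)%nat /\
    high_eq k x p /\ (X = 0 -> p = 1).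

(* q is p'(X, r) given p = p(X, r).  At X = K no high doctor applies to a low
   hospital; we use the continuous extension p' = 1. *)
Definition is_p_low (K : nat) (r X p q : R) : Prop :=
  0 < q <= 1 /\
  exists (k : nat) (x : R),
    X = INR k + x /\ 0 <= x < 1 /\ (k <= K)%nat /\
    low_eq K k r x p q /\ (X = INR K -> q = 1).

(* Main.v *)
Require Import Defs.
From Stdlib Require Import Reals Lra Lia.
Open Scope R_scope.

Lemma G_decr a b : 0 < a < b -> (1 - exp (- b)) / b < (1 - exp (- a)) / a.
Proof.
  intros [ha hab].
  set (d := b - a).
  assert (hd : 0 < d) by (unfold d; lra).
  assert (e1 : exp (- a) * exp a = 1).
  { rewrite <- exp_plus. replace (- a + a) with 0 by ring. apply exp_0. }
  assert (e2 : exp (- b) = exp (- a) * exp (- d)).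
  { rewrite <- exp_plus. f_equal. unfold d. ring. }
  assert (i1 : 1 + a < exp a) by (apply exp_ineq1; lra).
  assert (i2 : 1 + - d < exp (- d)) by (apply exp_ineq1; lra).
  assert (pa : 0 < exp (- a)) by apply exp_pos.
  assert (h1 : a * exp (- a) < 1 - exp (- a)).
  { assert (exp (- a) * (1 + a) < exp (- a) * exp a) by (apply Rmult_lt_compat_l; lra). nra. }
  assert (h2 : exp (- a) - exp (- b) < d * exp (- a)).
  { rewrite e2. assert (exp (- a) * (1 - exp (- d)) < exp (- a) * d) by (apply Rmult_lt_compat_l; lra). nra. }
  assert (key : a * (1 - exp (- b)) < b * (1 - exp (- a))).
  { assert (b = a + d) by (unfold d; ring).
    assert (a * (exp (- a) - exp (- b)) < a * (d * exp (- a))) by (apply Rmult_lt_compat_l; lra).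
    assert (d * (a * exp (- a)) < d * (1 - exp (- a))) by (apply Rmult_lt_compat_l; lra).
    replace (b * (1 - exp (- a))) with (a * (1 - exp (- a)) + d * (1 - exp (- a))) by (rewrite H; ring).
    lra. }
  assert (0 < (b * (1 - exp (- a)) - a * (1 - exp (- b))) / (a * b)).
  { apply Rdiv_lt_0_compat; nra. }
  replace ((1 - exp (- a)) / a) with ((1 - exp (- b)) / b + (b * (1 - exp (- a)) - a * (1 - exp (- b))) / (a * b)).
  lra. field. lra.
Qed.

Lemma fp_mu c p m : 0 < c -> 0 < p -> 0 < m ->
  m = c * (1 - exp (- (m / (c * p)))) ->
  0 < m / (c * p) /\ m = c * (1 - exp (- (m / (c * p)))) /\
  p = (1 - exp (- (m / (c * p)))) / (m / (c * p)).
Proof.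
  intros hc hp hm he.
  assert (hmu : 0 < m / (c * p)) by (apply Rdiv_lt_0_compat; nra).
  split; [exact hmu|split; [exact he|]].
  set (mu := m / (c * p)) in *.
  assert (E : 1 - exp (- mu) = m / c) by (rewrite he; field; lra).
  rewrite E. unfold mu. field. repeat split; lra.
Qed.

Lemma cmp c p1 p2 m1 m2 : 0 < c -> 0 < p1 -> 0 < p2 -> 0 < m1 -> 0 < m2 ->
  m1 = c * (1 - exp (- (m1 / (c * p1)))) ->
  m2 = c * (1 - exp (- (m2 / (c * p2)))) ->
  m1 < m2 -> p2 < p1.
Proof.
  intros hc h1 h2 hm1 hm2 e1 e2 hlt.
  destruct (fp_mu c p1 m1 hc h1 hm1 e1) as [u1 [f1 g1]].
  destruct (fp_mu c p2 m2 hc h2 hm2 e2) as [u2 [f2 g2]].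
  set (mu1 := m1 / (c * p1)) in *. set (mu2 := m2 / (c * p2)) in *.
  assert (exp (- mu2) < exp (- mu1)) by nra.
  apply exp_lt_inv in H.
  rewrite g1, g2. apply G_decr. lra.
Qed.

Lemma cmp_rev c p1 p2 m1 m2 : 0 < c -> 0 < p1 -> 0 < p2 -> 0 < m1 -> 0 < m2 ->
  m1 = c * (1 - exp (- (m1 / (c * p1)))) ->
  m2 = c * (1 - exp (- (m2 / (c * p2)))) ->
  p2 < p1 -> m1 < m2.
Proof.
  intros hc h1 h2 hm1 hm2 e1 e2 hlt.
  destruct (total_order_T m1 m2) as [[H|H]|H]; [exact H| |].
  - exfalso. subst m2.
    destruct (fp_mu c p1 m1 hc h1 hm1 e1) as [u1 [f1 g1]].
    destruct (fp_mu c p2 m1 hc h2 hm2 e2) as [u2 [f2 g2]].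
    set (mu1 := m1 / (c * p1)) in *. set (mu2 := m1 / (c * p2)) in *.
    assert (exp (- mu2) = exp (- mu1)) by nra.
    apply exp_inv in H. assert (mu1 = mu2) by lra.
    rewrite H0 in g1. lra.
  - exfalso. pose proof (cmp c p2 p1 m2 m1 hc h2 h1 hm2 hm1 e2 e1 H). lra.
Qed.

Definition g (k : nat) (x s : R) : R := (1 - x) * s ^ k + x * s ^ (S k).
Definition ML (K k : nat) (x s t : R) : R :=
  (1 - x) * s ^ k * (1 - t ^ (K - k)) + x * s ^ (S k) * (1 - t ^ (K - k - 1)).

Lemma mh_g k x p : matched_high k x p = 1 - g k x (1 - p).
Proof. unfold matched_high, g. ring. Qed.

Lemma ml_ML K k x p q : matched_low K k x p q = ML K k x (1 - p) (1 - q).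
Proof. reflexivity. Qed.

Lemma pow_le1 t n : 0 <= t <= 1 -> t ^ n <= 1.
Proof. intros h. rewrite <- (pow1 n). apply pow_incr. lra. Qed.

Lemma pow_exp_le t n m : 0 <= t <= 1 -> (n <= m)%nat -> t ^ m <= t ^ n.
Proof.
  intros h hnm. replace m with (n + (m - n))%nat by lia. rewrite pow_add.
  pose proof (pow_le t n ltac:(lra)). pose proof (pow_le1 t (m - n) h).
  pose proof (pow_le t (m - n) ltac:(lra)). nra.
Qed.

Lemma g_nonneg k x s : 0 <= x <= 1 -> 0 <= s -> 0 <= g k x s.
Proof.
  intros hx hs. unfold g. pose proof (pow_le s k hs). pose proof (pow_le s (S k) hs). nra.
Qed.

Lemma g_mono_s k x s s' : 0 <= x <= 1 -> 0 <= s <= s' -> g k x s <= g k x s'.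
Proof.
  intros hx hs. unfold g. pose proof (pow_incr s s' k hs). pose proof (pow_incr s s' (S k) hs).
  nra.
Qed.

Lemma g_X k1 x1 k2 x2 s : 0 <= x1 < 1 -> 0 <= x2 < 1 -> 0 < s < 1 ->
  (k1 < k2)%nat \/ (k1 = k2 /\ x1 < x2) -> g k2 x2 s < g k1 x1 s.
Proof.
  intros hx1 hx2 hs [hk|[-> hx]].
  - assert (A : g k2 x2 s <= s ^ k2).
    { unfold g. simpl. pose proof (pow_le s k2 ltac:(lra)).
      assert (0 <= x2 * (1 - s) * s ^ k2) by (repeat apply Rmult_le_pos; lra). nra. }
    assert (B : s ^ k2 <= s ^ (S k1)) by (apply pow_exp_le; [lra|lia]).
    assert (C : s ^ (S k1) < g k1 x1 s).
    { unfold g. simpl. pose proof (pow_lt s k1 ltac:(lra)).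
      assert (0 < s ^ k1 * ((1 - x1) * (1 - s))) by (apply Rmult_lt_0_compat; nra). nra. }
    lra.
  - unfold g. simpl. pose proof (pow_lt s k2 ltac:(lra)).
    assert (0 < s ^ k2 * ((x2 - x1) * (1 - s))) by (apply Rmult_lt_0_compat; nra). nra.
Qed.

Lemma pow_step t K k : (k < K)%nat -> 0 <= t <= 1 -> t ^ (K - k) <= t ^ (K - k - 1).
Proof. intros. apply pow_exp_le; [lra|lia]. Qed.

Lemma low_upper K k x s t : (k < K)%nat -> 0 <= x <= 1 -> 0 <= s -> 0 <= t <= 1 ->
  ML K k x s t <= (1 - t ^ (K - k)) * g k x s.
Proof.
  intros hk hx hs ht. unfold ML, g.
  pose proof (pow_step t K k hk ht).
  pose proof (pow_le s (S k) hs).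
  assert (0 <= x * s ^ (S k)) by nra.
  assert (x * s ^ (S k) * (t ^ (K - k) - t ^ (K - k - 1)) <= 0).
  { assert (0 <= x * s ^ (S k) * (t ^ (K - k - 1) - t ^ (K - k))) by (apply Rmult_le_pos; lra). nra. }
  nra.
Qed.

Lemma low_lower K k x s t : (k < K)%nat -> 0 <= x <= 1 -> 0 <= s -> 0 <= t <= 1 ->
  (1 - t ^ (K - k - 1)) * g k x s <= ML K k x s t.
Proof.
  intros hk hx hs ht. unfold ML, g.
  pose proof (pow_step t K k hk ht).
  pose proof (pow_le s k hs).
  assert (0 <= (1 - x) * s ^ k) by nra.
  assert (0 <= (1 - x) * s ^ k * (t ^ (K - k - 1) - t ^ (K - k))).
  { apply Rmult_le_pos; lra. }
  nra.
Qed.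

Lemma low_t_mono K k x s t1 t2 : 0 <= x <= 1 -> 0 <= s -> 0 <= t1 <= t2 ->
  ML K k x s t2 <= ML K k x s t1.
Proof.
  intros hx hs ht. unfold ML.
  pose proof (pow_incr t1 t2 (K - k) ht).
  pose proof (pow_incr t1 t2 (K - k - 1) ht).
  pose proof (pow_le s k hs). pose proof (pow_le s (S k) hs).
  assert (0 <= (1 - x) * s ^ k) by nra. assert (0 <= x * s ^ (S k)) by nra.
  assert (0 <= (1 - x) * s ^ k * (t2 ^ (K - k) - t1 ^ (K - k))) by (apply Rmult_le_pos; lra).
  assert (0 <= x * s ^ (S k) * (t2 ^ (K - k - 1) - t1 ^ (K - k - 1))) by (apply Rmult_le_pos; lra).
  nra.
Qed.

Lemma low_pos K k x s t : (k < K)%nat -> 0 <= x < 1 -> 0 < s ^ k -> 0 <= s -> 0 <= t < 1 ->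
  0 < ML K k x s t.
Proof.
  intros hk hx hsk hs ht. unfold ML.
  assert (t ^ (K - k) < 1) by (apply pow_lt_1_compat; [lra|lia]).
  pose proof (pow_le1 t (K - k - 1) ltac:(lra)).
  pose proof (pow_le s (S k) hs).
  assert (0 < (1 - x) * s ^ k * (1 - t ^ (K - k))).
  { apply Rmult_lt_0_compat; [apply Rmult_lt_0_compat|]; lra. }
  assert (0 <= x * s ^ (S k) * (1 - t ^ (K - k - 1))).
  { apply Rmult_le_pos; [apply Rmult_le_pos|]; lra. }
  lra.
Qed.

Lemma ML_split K k x s t : (k < K)%nat ->
  ML K k x s t = (1 - t ^ (K - k)) * g k x s
     - ((1 - t ^ (K - k)) - (1 - t ^ (K - k - 1))) * (x * s ^ (S k)).
Proof. intros. unfold ML, g. ring. Qed.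

Lemma piece_unique k x k' x' : 0 <= x < 1 -> 0 <= x' < 1 -> INR k + x = INR k' + x' ->
  k = k' /\ x = x'.
Proof.
  intros hx hx' he.
  destruct (Nat.lt_trichotomy k k') as [h|[h|h]].
  - exfalso.
    assert (INR (S k) <= INR k') by (apply le_INR; lia).
    rewrite S_INR in H. lra.
  - subst. split; [reflexivity|lra].
  - exfalso. assert (INR (S k') <= INR k) by (apply le_INR; lia).
    rewrite S_INR in H. lra.
Qed.

Lemma piece_order k1 x1 k2 x2 : 0 <= x1 < 1 -> 0 <= x2 < 1 -> INR k1 + x1 < INR k2 + x2 ->
  (k1 < k2)%nat \/ (k1 = k2 /\ x1 < x2).
Proof.
  intros hx1 hx2 h.
  destruct (Nat.lt_trichotomy k1 k2) as [H|[H|H]].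
  - left; exact H.
  - right. subst. split; [reflexivity|lra].
  - exfalso. assert (INR (S k2) <= INR k1) by (apply le_INR; lia).
    rewrite S_INR in H0. lra.
Qed.

Lemma X0_piece k x : 0 <= x < 1 -> INR k + x = 0 -> k = 0%nat /\ x = 0.
Proof.
  intros hx h. pose proof (pos_INR k).
  assert (INR k = 0) by lra. split; [apply INR_eq; simpl; exact H0 | lra].
Qed.

Lemma p_lt1 k x p : 0 <= x < 1 -> 0 < INR k + x -> high_eq k x p -> p <= 1 -> p < 1.
Proof.
  intros hx hX he hp. destruct (Req_dec p 1) as [E|E]; [|lra].
  exfalso. subst p. unfold high_eq in he. rewrite mh_g in he. unfold g in he.
  replace (1 - 1) with 0 in he by ring.
  destruct k as [|k].
  - simpl in he. simpl in hX.
    assert (hx0 : 0 < x) by lra.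
    replace (1 - ((1 - x) * 1 + x * (0 * 1))) with x in he by ring.
    replace (x / 1) with x in he by field.
    pose proof (exp_ineq1 (- x) ltac:(lra)). lra.
  - rewrite !pow_i in he by lia.
    replace (1 - ((1 - x) * 0 + x * 0)) with 1 in he by ring.
    replace (1 / 1) with 1 in he by field.
    match goal with he : _ = 1 - exp ?a |- _ => pose proof (exp_pos a) end. lra.
Qed.

Lemma hform k x p : high_eq k x p ->
  matched_high k x p = 1 * (1 - exp (- (matched_high k x p / (1 * p)))).
Proof. unfold high_eq. intros h. rewrite Rmult_1_l, Rmult_1_l. exact h. Qed.

Theorem claim1 :
  forall (K : nat) (r : R), 0 < r ->
  forall X1 X2 p1 p2 q1 q2 : R,
    0 <= X1 -> X1 < X2 -> X2 <= INR K ->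
    is_p_high K X1 p1 -> is_p_high K X2 p2 ->
    is_p_low K r X1 p1 q1 -> is_p_low K r X2 p2 q2 ->
    p2 < p1 /\ q1 < q2.
Proof.
  intros K r hr X1 X2 p1 p2 q1 q2 h0 h12 h2K H1 H2 L1 L2.
  destruct H1 as [[p1pos p1le] [k1 [x1 [eX1 [hx1 [hk1 [he1 hz1]]]]]]].
  destruct H2 as [[p2pos p2le] [k2 [x2 [eX2 [hx2 [hk2 [he2 hz2]]]]]]].
  destruct L1 as [[q1pos q1le] [k1' [x1' [eX1' [hx1' [hk1' [le1 lz1]]]]]]].
  destruct L2 as [[q2pos q2le] [k2' [x2' [eX2' [hx2' [hk2' [le2 lz2]]]]]]].
  destruct (piece_unique k1 x1 k1' x1' hx1 hx1' ltac:(lra)) as [<- <-].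
  destruct (piece_unique k2 x2 k2' x2' hx2 hx2' ltac:(lra)) as [<- <-].
  clear eX1' eX2' hx1' hx2' hk1' hk2'.
  assert (hpc : (k1 < k2)%nat \/ (k1 = k2 /\ x1 < x2)) by (apply piece_order; lra).
  assert (hX2 : 0 < X2) by lra.
  assert (p2lt : p2 < 1) by (apply (p_lt1 k2 x2); [lra|lra|exact he2|lra]).
  assert (HH : p2 < p1 /\ g k2 x2 (1 - p2) < g k1 x1 (1 - p1) /\ 0 < (1 - p1) ^ k1).
  { destruct (Req_dec X1 0) as [Z|Z].
    - destruct (X0_piece k1 x1 hx1 ltac:(lra)) as [-> ->].
      rewrite (hz1 Z). split; [lra|split].
      + replace (g 0 0 (1 - 1)) with 1 by (unfold g; simpl; ring).
        assert (g k2 x2 (1 - p2) < g 0 0 (1 - p2)).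
        { apply g_X; try lra. destruct k2 as [|k2']; [right; split; [reflexivity|simpl in eX2; lra] | left; lia]. }
        unfold g at 2 in H. simpl in H. lra.
      + simpl. lra.
    - assert (p1lt : p1 < 1) by (apply (p_lt1 k1 x1); [lra|lra|exact he1|lra]).
      assert (m1pos : 0 < matched_high k1 x1 p1).
      { rewrite mh_g. assert (g k1 x1 (1 - p1) < g 0 0 (1 - p1)).
        { apply g_X; try lra. destruct k1 as [|k1']; [right; split; [reflexivity|simpl in eX1; lra] | left; lia]. }
        unfold g at 2 in H. simpl in H. lra. }
      assert (m2pos : 0 < matched_high k2 x2 p2).
      { rewrite mh_g. assert (g k2 x2 (1 - p2) < g 0 0 (1 - p2)).
        { apply g_X; try lra. destruct k2 as [|k2']; [right; split; [reflexivity|simpl in eX2; lra] | left; lia]. }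
        unfold g at 2 in H. simpl in H. lra. }
      assert (pp : p2 < p1).
      { destruct (Rlt_le_dec p2 p1) as [h|h]; [exact h|exfalso].
        assert (g k2 x2 (1 - p2) <= g k2 x2 (1 - p1)) by (apply g_mono_s; lra).
        assert (g k2 x2 (1 - p1) < g k1 x1 (1 - p1)) by (apply g_X; [lra|lra|lra|exact hpc]).
        assert (MM : matched_high k1 x1 p1 < matched_high k2 x2 p2) by (rewrite !mh_g; lra).
        pose proof (cmp 1 p1 p2 _ _ ltac:(lra) p1pos p2pos m1pos m2pos (hform _ _ _ he1) (hform _ _ _ he2) MM).
        lra. }
      split; [exact pp|split].
      + pose proof (cmp_rev 1 p1 p2 _ _ ltac:(lra) p1pos p2pos m1pos m2pos (hform _ _ _ he1) (hform _ _ _ he2) pp).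
        rewrite !mh_g in H. lra.
      + apply pow_lt. lra. }
  destruct HH as [pp [gg s1k]].
  split; [exact pp|].
  assert (k1K : (k1 < K)%nat).
  { assert (INR k1 < INR K) by (pose proof (pos_INR k1); lra). apply INR_lt. exact H. }
  destruct (Req_dec X2 (INR K)) as [E|E].
  - rewrite (lz2 E). destruct (Req_dec q1 1) as [Q|Q]; [|lra].
    exfalso. subst q1. unfold low_eq in le1. rewrite ml_ML in le1.
    assert (Mpos : 0 < ML K k1 x1 (1 - p1) (1 - 1)).
    { apply low_pos; try lra; auto. }
    set (M := ML K k1 x1 (1 - p1) (1 - 1)) in *.
    replace (r * 1) with r in le1 by ring.
    pose proof (exp_ineq1 (- (M / r))).
    assert (0 < M / r) by (apply Rdiv_lt_0_compat; lra).
    assert (r * (1 - exp (- (M / r))) < r * (M / r)) by (apply Rmult_lt_compat_l; lra).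
    replace (r * (M / r)) with M in H1 by (field; lra). lra.
  - assert (k2K : (k2 < K)%nat).
    { assert (INR k2 < INR K) by (pose proof (pos_INR k2); lra). apply INR_lt. exact H. }
    destruct (Rlt_le_dec q1 q2) as [h|h]; [exact h|exfalso].
    unfold low_eq in le1, le2. rewrite ml_ML in le1, le2.
    assert (s2pos : 0 < 1 - p2) by lra.
    assert (Lpos2 : 0 < ML K k2 x2 (1 - p2) (1 - q2)).
    { apply low_pos; try lra; auto. apply pow_lt; lra. }
    assert (LL : ML K k2 x2 (1 - p2) (1 - q2) < ML K k1 x1 (1 - p1) (1 - q1)).
    { pose proof (g_nonneg k2 x2 (1 - p2) ltac:(lra) ltac:(lra)) as g2nn.
      destruct hpc as [hk|[<- hx]].
      + assert (U := low_upper K k2 x2 (1 - p2) (1 - q2) k2K ltac:(lra) ltac:(lra) ltac:(lra)).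
        assert (Lo := low_lower K k1 x1 (1 - p1) (1 - q1) k1K ltac:(lra) ltac:(lra) ltac:(lra)).
        assert (c1 : (1 - q1) ^ (K - k1 - 1) <= (1 - q1) ^ (K - k2)) by (apply pow_exp_le; [lra|lia]).
        assert (c2 : (1 - q1) ^ (K - k2) <= (1 - q2) ^ (K - k2)) by (apply pow_incr; lra).
        assert (c3 : (1 - q1) ^ (K - k1 - 1) < 1) by (apply pow_lt_1_compat; [lra|lia]).
        assert (A : (1 - (1 - q2) ^ (K - k2)) * g k2 x2 (1 - p2) <= (1 - (1 - q1) ^ (K - k1 - 1)) * g k2 x2 (1 - p2))
          by (apply Rmult_le_compat_r; lra).
        assert (B : (1 - (1 - q1) ^ (K - k1 - 1)) * g k2 x2 (1 - p2) < (1 - (1 - q1) ^ (K - k1 - 1)) * g k1 x1 (1 - p1))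
          by (apply Rmult_lt_compat_l; lra).
        lra.
      + assert (T := low_t_mono K k1 x2 (1 - p2) (1 - q1) (1 - q2) ltac:(lra) ltac:(lra) ltac:(lra)).
        rewrite (ML_split K k1 x2 (1 - p2) (1 - q1) k1K) in T.
        rewrite (ML_split K k1 x1 (1 - p1) (1 - q1) k1K).
        assert (c0 : (1 - q1) ^ (K - k1) <= (1 - q1) ^ (K - k1 - 1)) by (apply pow_step; [exact k1K|lra]).
        assert (c3 : (1 - q1) ^ (K - k1) < 1) by (apply pow_lt_1_compat; [lra|lia]).
        assert (P : x1 * (1 - p1) ^ (S k1) <= x2 * (1 - p2) ^ (S k1)).
        { apply Rmult_le_compat; try lra. apply pow_le; lra. apply pow_incr; lra. }
        assert (A : (1 - (1 - q1) ^ (K - k1)) * g k1 x2 (1 - p2) < (1 - (1 - q1) ^ (K - k1)) * g k1 x1 (1 - p1))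
          by (apply Rmult_lt_compat_l; lra).
        assert (B : ((1 - (1 - q1) ^ (K - k1)) - (1 - (1 - q1) ^ (K - k1 - 1))) * (x1 * (1 - p1) ^ (S k1))
                 <= ((1 - (1 - q1) ^ (K - k1)) - (1 - (1 - q1) ^ (K - k1 - 1))) * (x2 * (1 - p2) ^ (S k1)))
          by (apply Rmult_le_compat_l; lra).
        lra. }
    assert (Lpos1 : 0 < ML K k1 x1 (1 - p1) (1 - q1)) by lra.
    pose proof (cmp r q2 q1 _ _ hr q2pos q1pos Lpos2 Lpos1 le2 le1 LL). lra.
Qed.
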